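(* Every regainingly approximable number is speedable.
   Context: A real $x$ is regainingly approximable if there is a computable non-decreasing sequence of rationals $(x_n)_n$ converging to $x$ with $x - x_n < 2^{-n}$ for infinitely many $n\in\mathbb{N}$. A left-computable real $x$ (i.e. limit of a computable non-decreasing sequence of rationals) is speedable if there exist $\rho\in(0,1)$ and a computable strictly increasing sequence of rationals $(x_n)_n$ converging to $x$ such that $\frac{x-x_{n+1}}{x-x_n}\le\rho$ for infinitely many $n\in\mathbb{N}$. *)

(* Defs.v *)
From HB Require Import structures.
From mathcomp Require Import all_boot all_order all_algebra.
From mathcomp Require Import all_classical all_reals all_analysis.
From Stdlib Require Import List.

Set Implicit Arguments.
Unset Strict Implicit.
Unset Printing Implicit Defensive.

Import Order.TTheory GRing.Theory Num.Theory.
Import numFieldNormedType.Exports.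
Local Open Scope classical_set_scope.
Local Open Scope ring_scope.

Inductive recf : Type :=
| RZero : recf
| RSucc : recf
| RProj : nat -> recf
| RComp : recf -> list recf -> recf
| RPrimRec : recf -> recf -> recf
| RMu : recf -> recf.

Inductive reval : recf -> list nat -> nat -> Prop :=
| ev_zero v : reval RZero v 0
| ev_succ v : reval RSucc v (S (List.hd 0%N v))
| ev_proj i v : reval (RProj i) v (List.nth i v 0%N)
| ev_comp f gs v ys y :
    revals gs v ys -> reval f ys y -> reval (RComp f gs) v y
| ev_pr0 f g v y : reval f v y -> reval (RPrimRec f g) (0%N :: v) y
| ev_prS f g n v r y :
    reval (RPrimRec f g) (n :: v) r -> reval g (n :: r :: v) y ->
    reval (RPrimRec f g) (S n :: v) y
| ev_mu f v n :
    reval f (n :: v) 0 ->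
    (forall m, (m < n)%N -> exists k, reval f (m :: v) (S k)) ->
    reval (RMu f) v n
with revals : list recf -> list nat -> list nat -> Prop :=
| evs_nil v : revals nil v nil
| evs_cons g gs v y ys : reval g v y -> revals gs v ys -> revals (g :: gs) v (y :: ys).

Definition computable_nat (f : nat -> nat) : Prop :=
  exists c : recf, forall n, reval c (n :: nil) (f n).

Definition computable_rat_seq (q : nat -> rat) : Prop :=
  exists a b c : nat -> nat,
    [/\ computable_nat a, computable_nat b, computable_nat c &
        forall n, q n = ((a n)%:R - (b n)%:R) / ((c n).+1)%:R].

Definition nondecr_ratseq (q : nat -> rat) : Prop := forall n, q n <= q n.+1.
Definition incr_ratseq (q : nat -> rat) : Prop := forall n, q n < q n.+1.

Definition converges_to {R : realType} (q : nat -> rat) (x : R) : Prop :=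
  (fun n => ratr (q n) : R) @ \oo --> x.

Definition infinitely_often (P : nat -> Prop) : Prop :=
  forall N, exists n, (N <= n)%N /\ P n.

Definition left_computable {R : realType} (x : R) : Prop :=
  exists q : nat -> rat,
    [/\ computable_rat_seq q, nondecr_ratseq q & converges_to q x].

Definition regainingly_approximable {R : realType} (x : R) : Prop :=
  exists q : nat -> rat,
    [/\ computable_rat_seq q, nondecr_ratseq q, converges_to q x &
        infinitely_often (fun n => x - ratr (q n) < (2 : R) ^- n)].

Definition speedable {R : realType} (x : R) : Prop :=
  left_computable x /\
  exists rho : R, (0 < rho < 1) /\
  exists q : nat -> rat,
    [/\ computable_rat_seq q, incr_ratseq q, converges_to q x &
        infinitely_often
          (fun n => (x - ratr (q n.+1)) / (x - ratr (q n)) <= rho)].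

(* Main.v *)
Require Import Defs.
From mathcomp Require Import all_boot all_order all_algebra.
From mathcomp Require Import all_classical all_reals all_analysis.
From mathcomp Require Import ring lra zify.
From Stdlib Require Import Lia.
Import Order.TTheory GRing.Theory Num.Theory.
Import numFieldNormedType.Exports.
Local Open Scope classical_set_scope.

Definition padd := RPrimRec (RProj 0) (RComp RSucc [:: RProj 1]).
Lemma padd_spec n m v : reval padd (n :: m :: v) (n + m).
Proof.
elim: n => [|n IH]; first by rewrite add0n; apply: ev_pr0; exact: (ev_proj 0 (m :: v)).
rewrite addSn; apply: (ev_prS IH).
apply: (ev_comp (ys := [:: n + m])); last exact: (ev_succ [:: n + m]).
apply: evs_cons; last exact: evs_nil.
exact: (ev_proj 1 (n :: n + m :: m :: v)).
Qed.

Definition pmul := RPrimRec RZero (RComp padd [:: RProj 1; RProj 2]).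
Lemma pmul_spec n m v : reval pmul (n :: m :: v) (n * m).
Proof.
elim: n => [|n IH]; first by rewrite mul0n; apply: ev_pr0; exact: ev_zero.
rewrite mulSn addnC; apply: (ev_prS IH).
apply: (ev_comp (ys := [:: n * m; m])); last exact: padd_spec.
apply: evs_cons; first exact: (ev_proj 1 (n :: n * m :: m :: v)).
apply: evs_cons; last exact: evs_nil.
exact: (ev_proj 2 (n :: n * m :: m :: v)).
Qed.

Definition ppow2 := RPrimRec (RComp RSucc [:: RZero]) (RComp padd [:: RProj 1; RProj 1]).
Lemma ppow2_spec n v : reval ppow2 (n :: v) (2 ^ n).
Proof.
elim: n => [|n IH].
  apply: ev_pr0; apply: (ev_comp (ys := [:: 0])); last exact: (ev_succ [:: 0]).
  apply: evs_cons; [exact: ev_zero | exact: evs_nil].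
rewrite expnS mul2n -addnn; apply: (ev_prS IH).
apply: (ev_comp (ys := [:: 2 ^ n; 2 ^ n])); last exact: padd_spec.
apply: evs_cons; first exact: (ev_proj 1 (n :: 2 ^ n :: v)).
apply: evs_cons; last exact: evs_nil.
exact: (ev_proj 1 (n :: 2 ^ n :: v)).
Qed.

Definition ppred := RPrimRec RZero (RProj 0).
Lemma ppred_spec n v : reval ppred (n :: v) n.-1.
Proof.
elim: n => [|n IH]; first by apply: ev_pr0; exact: ev_zero.
apply: (ev_prS IH); exact: (ev_proj 0 (n :: n.-1 :: v)).
Qed.

Lemma comp_bin (p : recf) (h : nat -> nat -> nat) f g :
  (forall n m, reval p [:: n; m] (h n m)) ->
  computable_nat f -> computable_nat g -> computable_nat (fun n => h (f n) (g n)).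
Proof.
move=> hp [cf Hf] [cg Hg]; exists (RComp p [:: cf; cg]) => n.
apply: (ev_comp (ys := [:: f n; g n])); last exact: hp.
apply: evs_cons; first exact: Hf.
apply: evs_cons; [exact: Hg | exact: evs_nil].
Qed.

Lemma comp_un (h f : nat -> nat) :
  computable_nat h -> computable_nat f -> computable_nat (fun n => h (f n)).
Proof.
move=> [ch Hh] [cf Hf]; exists (RComp ch [:: cf]) => n.
apply: (ev_comp (ys := [:: f n])); last exact: Hh.
apply: evs_cons; [exact: Hf | exact: evs_nil].
Qed.

Lemma c_add f g : computable_nat f -> computable_nat g -> computable_nat (fun n => f n + g n).
Proof. apply: (@comp_bin padd) => n m; exact: padd_spec. Qed.
Lemma c_mul f g : computable_nat f -> computable_nat g -> computable_nat (fun n => f n * g n).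
Proof. apply: (@comp_bin pmul) => n m; exact: pmul_spec. Qed.
Lemma c_pow2 : computable_nat (fun n => 2 ^ n).
Proof. by exists ppow2 => n; exact: ppow2_spec. Qed.
Lemma c_pred : computable_nat (fun n => n.-1).
Proof. by exists ppred => n; exact: ppred_spec. Qed.
Lemma c_succ : computable_nat (fun n => n.+1).
Proof. by exists RSucc => n; exact: (ev_succ [:: n]). Qed.
Lemma c_id : computable_nat (fun n => n).
Proof. by exists (RProj 0) => n; exact: (ev_proj 0 [:: n]). Qed.

Lemma c_new a b c : computable_nat a -> computable_nat b -> computable_nat c ->
  [/\ computable_nat (fun n => a n * 2 ^ n),
      computable_nat (fun n => b n * 2 ^ n + n.+2 * (c n).+1) &
      computable_nat (fun n => ((c n).+1 * 2 ^ n).-1)].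
Proof.
move=> ca cb cc; split.
- exact: c_mul ca c_pow2.
- apply: c_add; first exact: c_mul cb c_pow2.
  apply: c_mul; last exact: (@comp_un (fun n => n.+1) c c_succ cc).
  exact: (@comp_un (fun n => n.+1) (fun n => n.+1) c_succ c_succ).
- apply: (@comp_un (fun n => n.-1) (fun n => (c n).+1 * 2 ^ n) c_pred).
  apply: c_mul c_pow2.
  exact: (@comp_un (fun n => n.+1) c c_succ cc).
Qed.
Local Open Scope ring_scope.

Lemma nat_bound n : (n.+2 * n.+1 <= 4 * 2 ^ n)%N.
Proof.
elim: n => [//|n IH]; rewrite expnS.
case: n IH => [//|n] IH; nia.
Qed.

Lemma s_cvg (R : realType) : (fun n : nat => (n.+2)%:R / (2 : R) ^+ n) @ \oo --> (0 : R).
Proof.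
apply: (@squeeze_cvgr _ _ _ _ (fun _ => 0) (fun n => 4 * harmonic n)).
- apply: nearW => n; apply/andP; split.
    by apply: divr_ge0; [exact: ler0n | exact: exprn_ge0].
  rewrite /harmonic /= ler_pdivrMr ?exprn_gt0 //.
  rewrite -natrX -[4 : R]/(4%:R) mulrAC ler_pdivlMr ?ltr0n //.
  rewrite -!natrM ler_nat; have := nat_bound n; nia.
- exact: cvg_cst.
- rewrite -(mulr0 (4 : R)); apply: cvgM; [exact: cvg_cst | exact: cvg_harmonic].
Qed.

Lemma inv2S (F : fieldType) n : ((2 : F) ^+ n.+1)^-1 = ((2 : F) ^+ n)^-1 / 2.
Proof. by rewrite exprS invfM mulrC. Qed.

Lemma step_ineq (F : realFieldType) (k u : F) : 0 <= k -> 0 < u ->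
  (k + 3) * (u / 2) < (k + 2) * u.
Proof. move=> k0 u0; nra. Qed.

Lemma ratio_pos (F : realFieldType) (x a k u : F) : 0 <= k -> 0 < u -> a <= x ->
  0 < x - (a - (k + 2) * u).
Proof. move=> k0 u0 ax; nra. Qed.

Lemma ratio_ineq (F : realFieldType) (x a b k u : F) : 2 <= k -> 0 < u -> a <= x ->
  x - b < u / 2 -> x - (b - (k + 3) * (u / 2)) <= 3 / 4 * (x - (a - (k + 2) * u)).
Proof. move=> k2 u0 ax hb; nra. Qed.

Lemma natS2 (F : pzSemiRingType) n : (n.+2)%:R = n%:R + 2 :> F.
Proof. by rewrite -addn2 natrD. Qed.
Lemma natS3 (F : pzSemiRingType) n : (n.+3)%:R = n%:R + 3 :> F.
Proof. by rewrite -addn3 natrD. Qed.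

Lemma divE (F : fieldType) (k : F) n : k / 2 ^+ n = k * ((2 : F) ^+ n)^-1.
Proof. by []. Qed.

Lemma main_real (R : realType) (x : R) (q : nat -> rat) :
  nondecr_ratseq q -> converges_to q x ->
  infinitely_often (fun n => x - ratr (q n) < (2 : R) ^- n) ->
  let y := fun n : nat => q n - (n.+2)%:R / (2 : rat) ^+ n in
  [/\ incr_ratseq y, converges_to y x &
    infinitely_often (fun n => (x - ratr (y n.+1)) / (x - ratr (y n)) <= 3 / 4)].
Proof.
move=> nd cv io y.
have ry n : ratr (y n) = ratr (q n) - (n.+2)%:R / (2 : R) ^+ n.
  rewrite /y rmorphB fmorph_div rmorphXn rmorph_nat.
  by congr (_ - _ / _ ^+ _); exact: (ratr_nat R 2).
have le_qx n : ratr (q n) <= x.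
  have nd' : nondecreasing_seq (fun n => ratr (q n) : R).
    by apply/nondecreasing_seqP => m; rewrite (ler_rat R); exact: nd.
  have cq : cvgn (fun n => ratr (q n) : R) by apply/cvg_ex; exists x.
  have := nondecreasing_cvgn_le nd' cq n.
  by rewrite (cvg_lim (@Rhausdorff R) cv).
have u0 (F : realFieldType) n : 0 < ((2 : F) ^+ n)^-1 by rewrite invr_gt0 exprn_gt0.
split.
- move=> n; rewrite /y !divE inv2S natS2 natS3.
  have := @step_ineq rat _ _ (ler0n rat n) (u0 rat n).
  have := nd n; lra.
- rewrite /converges_to.
  have -> : (fun n => ratr (y n) : R) = (fun n => ratr (q n) - (n.+2)%:R / 2 ^+ n).
    by apply: funext => n; exact: ry.
  rewrite -[x]subr0; apply: cvgB; [exact: cv | exact: s_cvg].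
- move=> N; have [m [Hm Hd]] := io N.+3.
  case: m Hm Hd => [//|n] Hm Hd; exists n; split; first by lia.
  rewrite !ry (divE _ (n.+3)%:R n.+1) (divE _ (n.+2)%:R n) (inv2S _ n) (natS2 _ n) (natS3 _ n).
  have k2 : (2 : R) <= n%:R by rewrite (ler_nat R 2); lia.
  rewrite ler_pdivrMr; last first.
    by apply: ratio_pos; [exact: ler0n | exact: u0 | exact: le_qx].
  by apply: ratio_ineq => //; rewrite -inv2S.
Qed.

Lemma rat_id (a b c n : nat) :
  ((a%:R - b%:R) / ((c.+1)%:R) - (n.+2)%:R / (2 : rat) ^+ n) =
  (((a * 2 ^ n)%N)%:R - ((b * 2 ^ n + n.+2 * c.+1)%N)%:R) /
  ((((c.+1 * 2 ^ n).-1).+1)%N)%:R.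
Proof.
rewrite prednK; last by rewrite muln_gt0 expn_gt0.
rewrite natrD (natrM _ c.+1 (2 ^ n)) !natrM natrX.
have hC : (c.+1)%:R != 0 :> rat by rewrite pnatr_eq0.
have h2 : (2 : rat) ^+ n != 0 by rewrite expf_neq0.
move: hC h2; move: (c.+1)%:R ((2 : rat) ^+ n) (a%:R : rat) (b%:R : rat) (n.+2)%:R.
by move=> C P A B K hC hP; field; rewrite hC hP.
Qed.

Theorem proposition5p2 (R : realType) (x : R) :
  regainingly_approximable x -> speedable x.
Proof.
move=> [q [Hc Hnd Hcv Hio]].
split; first by exists q.
exists (3 / 4); split; first by apply/andP; split; lra.
have [Hi Hcy Hioy] := @main_real R x q Hnd Hcv Hio.
exists (fun n => q n - (n.+2)%:R / (2 : rat) ^+ n); split => //.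
case: Hc => [a [b [c [ca cb cc Hq]]]].
have [ca' cb' cc'] := @c_new a b c ca cb cc.
do 3 eexists; split; [exact: ca' | exact: cb' | exact: cc' | ].
by move=> n; rewrite Hq rat_id.
Qed.
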